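(* Let $k\ge 2$ and let $s_k$ and $w_k$ be as in the context. Consider the SLP obtained after the first $k-1$ rounds of $\mathsf{RePair}$ on input $s_k$. Its rules other than the start rule are $X_1\to aa$ and $X_i\to X_{i-1}X_{i-1}$ for $2\le i\le k-1$. Its start rule is $S\to u_1bu_2b\cdots u_{k-1}bu_k$. For each $1\le i\le k$, we have $u_i=X_{k-1}^{q_i}v_i$, where $q_i=\lfloor N_i/2^{k-1}\rfloor$ and $N_i$ is the integer with binary representation $w_k[1:k+i]$; in particular $q_i\ge2$. The word $v_i$ is $$v_i=f_{k-2}(w_k[i+2])f_{k-3}(w_k[i+3])\cdots f_1(w_k[k+i-1])f_0(w_k[k+i]),$$ with $f_0(1)=a$, $f_0(0)=\varepsilon$, and for $j\ge1$, $f_j(1)=X_j$, $f_j(0)=\varepsilon$. In particular, in these first $k-1$ rounds the selected strings never contain the letter $b$.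
   Context: All logarithms are to base 2. A straight-line program (SLP) is a context-free grammar with exactly one production $A\to u$, $u$ a nonempty word over nonterminals and terminals, per nonterminal, with acyclic dependencies, so that it derives a single word. For an SLP, a word $\gamma$ over terminals and nonterminals is a maximal string if $|\gamma|\ge2$, $\gamma$ occurs at least twice without overlap in the right-hand sides, and no strictly longer word occurs at least as many times without overlap in the right-hand sides. $\mathsf{RePair}$ on input $w$ starts with the single rule $S\to w$. In each round it selects a maximal string $\gamma$ with the largest number of non-overlapping occurrences, replaces a largest set of pairwise non-overlapping occurrences of $\gamma$ (chosen from left to right) in the right-hand sides by a fresh nonterminal $X$, and adds $X\to\gamma$. It stops when no maximal string exists. For $k\ge2$, fix a binary de Bruijn sequence $B\in\{0,1\}^*$ of order $\lceil\log k\rceil$ that starts with $1$. It has length $2^{\lceil\log k\rceil}$, and each word of length $\lceil\log k\rceil$ occurs at most once as a factor of $B$. Let $h$ be the homomorphism with $h(0)=01$, $h(1)=10$. Put $w_k=h(B[1:k])$, a binary word of length $2k$ with $w_k[1]=1$. Define $$s_k=a^{w_k[1:k+1]}\,b\,a^{w_k[1:k+2]}\,b\cdots a^{w_k[1:2k-1]}\,b\,a^{w_k},$$ where each prefix $w_k[1:k+i]$ is read as a binary number giving the exponent. Here $w[i:j]$ denotes the factor from position $i$ to position $j$. *)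

(* Defs.v *)
From mathcomp Require Import all_boot.
Set Implicit Arguments. Unset Strict Implicit. Unset Printing Implicit Defensive.

(* inl true = terminal a, inl false = terminal b, inr i = nonterminal X_i. *)
Definition sym : Type := (bool + nat)%type.
Definition ta : sym := inl true.
Definition tb : sym := inl false.
Definition NT (i : nat) : sym := inr i.

(* An SLP is a pair (start rhs, rules); the j-th element (0-based) of the
   rules list is the right-hand side of nonterminal X_(j+1). *)
Definition slp : Type := (seq sym * seq (seq sym))%type.
Definition rhss (G : slp) : seq (seq sym) := G.1 :: G.2.

Definition nonoverlap_occs (g w : seq sym) (ps : seq nat) : Prop :=
  sorted (fun p q => p + size g <= q) ps /\
  (forall p, p \in ps -> take (size g) (drop p w) = g).

Definition max_nov (g w : seq sym) (n : nat) : Prop :=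
  (exists ps, nonoverlap_occs g w ps /\ size ps = n) /\
  (forall ps, nonoverlap_occs g w ps -> size ps <= n).

(* n is the largest number of non-overlapping occurrences of g in the
   right-hand sides of G (occurrences in distinct rhs never overlap). *)
Definition occ_count (G : slp) (g : seq sym) (n : nat) : Prop :=
  exists ns : seq nat,
    size ns = size (rhss G) /\
    (forall j, j < size ns -> max_nov g (nth [::] (rhss G) j) (nth 0 ns j)) /\
    sumn ns = n.

Definition maximal_string (G : slp) (g : seq sym) (n : nat) : Prop :=
  2 <= size g /\ occ_count G g n /\ 2 <= n /\
  (forall g' n', size g < size g' -> occ_count G g' n' -> n' < n).

Fixpoint repl_fuel (fuel : nat) (g : seq sym) (X : sym) (w : seq sym) : seq sym :=
  match fuel, w with
  | 0, _ => w
  | _, [::] => [::]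
  | f.+1, c :: w' =>
      if (0 < size g) && (take (size g) w == g)
      then X :: repl_fuel f g X (drop (size g) w)
      else c :: repl_fuel f g X w'
  end.
Definition repl (g : seq sym) (X : sym) (w : seq sym) : seq sym :=
  repl_fuel (size w) g X w.

Definition repair_step (G G' : slp) : Prop :=
  exists g n,
    maximal_string G g n /\
    (forall g' n', maximal_string G g' n' -> n' <= n) /\
    G' = (repl g (NT (size G.2).+1) G.1,
          rcons [seq repl g (NT (size G.2).+1) r | r <- G.2] g).

(* G' is obtained from G after n rounds of RePair (any tie-breaking). *)
Fixpoint repair_run (n : nat) (G G' : slp) : Prop :=
  match n with
  | 0 => G' = G
  | n'.+1 => exists G1, repair_step G G1 /\ repair_run n' G1 G'
  end.

Definition repair_init (w : seq sym) : slp := (w, [::]).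

Definition is_deBruijn (m : nat) (B : seq bool) : Prop :=
  size B = 2 ^ m /\
  forall i j, i < j -> j + m <= size B ->
    take m (drop i B) <> take m (drop j B).

Definition hmorph (c : bool) : seq bool := if c then [:: true; false] else [:: false; true].

Definition wk (k : nat) (B : seq bool) : seq bool := flatten (map hmorph (take k B)).

Definition binval (s : seq bool) : nat := foldl (fun acc (c : bool) => acc.*2 + nat_of_bool c) 0 s.

Definition Nk (k : nat) (B : seq bool) (i : nat) : nat := binval (take (k + i) (wk k B)).

Definition sk (k : nat) (B : seq bool) : seq sym :=
  flatten [seq nseq (Nk k B i) ta ++ [:: tb] | i <- iota 1 (k - 1)] ++ nseq (Nk k B k) ta.

Definition fsym (j : nat) (c : bool) : seq sym :=
  if c then (if j == 0 then [:: ta] else [:: NT j]) else [::].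

Definition qk (k : nat) (B : seq bool) (i : nat) : nat := Nk k B i %/ 2 ^ (k - 1).

(* v_i = f_(k-2)(w[i+2]) ... f_0(w[k+i]), positions 1-based *)
Definition vk (k : nat) (B : seq bool) (i : nat) : seq sym :=
  flatten [seq fsym (k + i - t) (nth false (wk k B) t.-1) | t <- iota (i + 2) (k - 1)].

Definition uk (k : nat) (B : seq bool) (i : nat) : seq sym :=
  nseq (qk k B i) (NT (k - 1)) ++ vk k B i.

Definition expected_start (k : nat) (B : seq bool) : seq sym :=
  flatten [seq uk k B i ++ [:: tb] | i <- iota 1 (k - 1)] ++ uk k B k.

Definition expected_rules (k : nat) : seq (seq sym) :=
  mkseq (fun j => if j == 0 then [:: ta; ta] else [:: NT j; NT j]) (k - 1).

(* Main.v *)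
Require Import Defs.
From mathcomp Require Import all_boot zify.
From Stdlib Require Import Classical.
Set Implicit Arguments. Unset Strict Implicit. Unset Printing Implicit Defensive.
Local Open Scope nat_scope.

Section Repl.
Variables (g : seq sym) (X : sym).
Hypothesis gpos : 0 < size g.

Lemma repl_fuel_enough f1 f2 w : size w <= f1 -> size w <= f2 ->
  repl_fuel f1 g X w = repl_fuel f2 g X w.
Proof.
elim: f1 f2 w => [|f1 IH] [|f2] [|c w] //= H1 H2.
rewrite gpos /=; case: ifP => _; congr (_ :: _); apply: IH => //;
  rewrite ?size_drop /=; lia.
Qed.

Lemma R_match w : take (size g) w = g -> repl g X w = X :: repl g X (drop (size g) w).
Proof.
case: w => [|c w] H; first by move: gpos; rewrite -H.
rewrite /repl /= gpos H eqxx /=; congr (_ :: _); apply: repl_fuel_enough;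
  rewrite size_drop /=; lia.
Qed.

Lemma R_nomatch c w : take (size g) (c :: w) != g -> repl g X (c :: w) = c :: repl g X w.
Proof. by move=> H; rewrite /repl /= (negbTE H) andbF. Qed.

Lemma R_nil : repl g X [::] = [::].
Proof. by []. Qed.
End Repl.

Section ReplYY.
Variables (Y X : sym).
Local Notation R := (repl [:: Y; Y] X).

Lemma RYY w : R (Y :: Y :: w) = X :: R w.
Proof. rewrite (@R_match [:: Y; Y] X erefl); [ by rewrite /= drop0 | by rewrite /= take0 ]. Qed.

Lemma Rne c w : c != Y -> R (c :: w) = c :: R w.
Proof.
move=> H; rewrite (@R_nomatch [:: Y; Y] X) //=; apply/eqP => -[E _]; by move: H; rewrite E eqxx.
Qed.

Lemma RY1 : R [:: Y] = [:: Y].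
Proof. rewrite (@R_nomatch [:: Y; Y] X) //=; by apply/eqP. Qed.

Lemma R_notin u w : Y \notin u -> R (u ++ w) = u ++ R w.
Proof.
elim: u => [|c u IH] //=; rewrite in_cons negb_or => /andP [H1 H2].
by rewrite Rne 1?eq_sym // IH.
Qed.

Lemma R_nseq q w : (forall c w', w = c :: w' -> c != Y) ->
  R (nseq q Y ++ w) = nseq q./2 X ++ nseq (odd q) Y ++ R w.
Proof.
move=> Hw.
pose P q := R (nseq q Y ++ w) = nseq q./2 X ++ nseq (odd q) Y ++ R w.
suff: P q /\ P q.+1 by case.
elim: q => [|q [IH1 IH2]].
  split; rewrite /P //=; clear P; case: w Hw => [|c w'] Hw; first exact: RY1.
  have Hc := Hw c w' erefl.
  rewrite (@R_nomatch [:: Y; Y] X Y (c :: w')) ?Rne //=.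
  apply/eqP => -[E]; by move: Hc; rewrite E eqxx.
split => //.
by rewrite /P /= RYY IH1 negbK.
Qed.
End ReplYY.

Lemma nov_nil g w : nonoverlap_occs g w [::].
Proof. by split. Qed.

Lemma path_shift m d x s : path (fun p q => p + m <= q) x s ->
  path (fun p q => p + m <= q) (d + x) [seq d + p | p <- s].
Proof.
elim: s x => [|y s IH] x //= /andP [H1 H2]; rewrite IH // andbT; lia.
Qed.

Lemma repl_witness g X f w : X \notin g -> 0 < size g ->
  exists ps, nonoverlap_occs g w ps /\
    count_mem X (repl_fuel f g X w) = size ps + count_mem X w.
Proof.
move=> Xg gp; elim: f w => [|f IH] [|c w] /=; try by exists [::].
rewrite gp /=; case: ifP => [/eqP H|H].
  have [ps [[Hs Ho] Hc]] := IH (drop (size g) (c :: w)).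
  exists (0 :: [seq size g + p | p <- ps]); split; last first.
    have E : count_mem X (c :: w) = count_mem X g + count_mem X (drop (size g) (c :: w)).
      by rewrite -{1}(cat_take_drop (size g) (c :: w)) count_cat H.
    move: E; rewrite /= => ->; rewrite Hc eqxx.
    move: Xg => /count_memPn Xg. rewrite Xg size_map /=; lia.
  split.
    case: ps Hs {Ho Hc} => [|p ps] //= Hs.
    rewrite (@path_shift (size g) (size g) _ _ Hs) andbT add0n leq_addr. done.
  move=> p; rewrite in_cons => /orP [/eqP -> | /mapP [p' Hp' ->]]; first by rewrite drop0.
  by rewrite addnC -drop_drop Ho.
have [ps [[Hs Ho] Hc]] := IH w.
exists [seq p.+1 | p <- ps]; split; last first.
  by rewrite /= Hc size_map addnCA.
split.
  case: ps Hs {Ho Hc} => [|p ps] //= Hs.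
  exact: (@path_shift (size g) 1 _ _ Hs).
by move=> p /mapP [p' Hp' ->] /=; rewrite Ho.
Qed.

Lemma count_drop_le (P : pred sym) n (l : seq sym) : count P (drop n l) <= count P l.
Proof. by rewrite -{2}(cat_take_drop n l) count_cat leq_addl. Qed.

Lemma nov_bound (P : pred sym) g w ps : nonoverlap_occs g w ps ->
  count P g * size ps <= count P w.
Proof.
case=> Hs Ho.
suff: forall s, all (fun p => s <= p) ps -> count P g * size ps <= count P (drop s w).
  by move/(_ 0); rewrite drop0; apply; apply/allP => x.
elim: ps Hs Ho => [|p ps IH] Hs Ho s /=; first by rewrite muln0. case/andP => Hsp _.
have Hall : all (fun q => p + size g <= q) ps.
  by apply: (order_path_min (leT := fun p q => p + size g <= q)) => // x y z; lia.
have IH' := IH (path_sorted Hs) (fun q Hq => Ho q (introT orP (or_intror Hq))) (p + size g) Hall.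
have E : drop p w = drop (p - s) (drop s w) by rewrite drop_drop subnK.
have E2 : count P (drop p w) = count P g + count P (drop (p + size g) w).
  by rewrite -{1}(cat_take_drop (size g) (drop p w)) count_cat Ho ?mem_head // drop_drop [addn (size g) p]addnC.
apply: (leq_trans _ (count_drop_le P (p - s) _)); rewrite -E E2 mulnS leq_add2l.
exact: IH'.
Qed.

Lemma max_nov_bound (P : pred sym) g w n : max_nov g w n -> count P g * n <= count P w.
Proof. by case=> [[ps [H <-]] _]; apply: nov_bound H. Qed.

Lemma occ_bound (P : pred sym) G g n : occ_count G g n ->
  count P g * n <= count P (flatten (rhss G)).
Proof.
case=> ns [Hsz [Hm <-]].
elim: (rhss G) ns Hsz Hm => [|r l IH] [|m ns] //= Hsz Hm.
  by rewrite muln0.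
rewrite count_cat mulnDr; apply: leq_add.
  exact: (max_nov_bound P (Hm 0 erefl)).
by apply: IH => [|j Hj]; [exact: (congr1 predn Hsz) | exact: (Hm j.+1 Hj)].
Qed.

Lemma max_nov_exists g w : 0 < size g -> exists n, max_nov g w n.
Proof.
move=> gp.
have Hb : forall ps, nonoverlap_occs g w ps -> size ps <= size w.
  move=> ps H; have := nov_bound predT H; rewrite !count_predT.
  by move=> H2; apply: leq_trans H2; rewrite leq_pmull.
move: (size w) Hb => b; elim: b => [|b IH] Hb.
  exists 0; split; first by exists [::]; split => //; exact: nov_nil.
  by move=> ps /Hb.
case: (classic (exists ps, nonoverlap_occs g w ps /\ size ps = b.+1)) => [[ps Hps]|Hn].
  by exists b.+1; split; [exists ps | move=> ps' /Hb].
apply: IH => ps Hps; have := Hb ps Hps; rewrite leq_eqVlt ltnS => /orP [/eqP E|//].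
by case: Hn; exists ps.
Qed.

Lemma max_nov_unique g w n1 n2 : max_nov g w n1 -> max_nov g w n2 -> n1 = n2.
Proof.
move=> [[ps1 [H1 E1]] B1] [[ps2 [H2 E2]] B2]; apply/eqP; rewrite eqn_leq.
by rewrite -{1}E1 -{2}E2 B2 ?B1.
Qed.

Lemma occ_exists G g : 0 < size g -> exists n, occ_count G g n.
Proof.
move=> gp; suff [ns [H1 H2]] : exists ns, size ns = size (rhss G) /\
   (forall j, j < size ns -> max_nov g (nth [::] (rhss G) j) (nth 0 ns j)).
  by exists (sumn ns), ns.
elim: (rhss G) => [|r l [ns [H1 H2]]]; first by exists [::].
have [n Hn] := max_nov_exists r gp.
by exists (n :: ns); split => /=; [rewrite H1 | case].
Qed.

Lemma occ_unique G g n1 n2 : occ_count G g n1 -> occ_count G g n2 -> n1 = n2.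
Proof.
case=> ns1 [S1 [M1 <-]] [ns2 [S2 [M2 <-]]].
suff -> : ns1 = ns2 by [].
apply: (eq_from_nth (x0 := 0)); first by rewrite S1 S2.
move=> i Hi; apply: max_nov_unique (M1 i Hi) (M2 i _); by rewrite S2 -S1.
Qed.

Definition Ysym r : sym := if r == 0 then ta else NT r.
Definition Vb r n : seq sym :=
  flatten [seq Defs.fsym (r.-1 - s) (odd (n %/ 2 ^ (r.-1 - s))) | s <- iota 0 r].
Definition Ub r n := nseq (n %/ 2 ^ r) (Ysym r) ++ Vb r n.
Definition stt r ns l := flatten [seq Ub r n ++ [:: tb] | n <- ns] ++ Ub r l.
Definition rrule j : seq sym := if j == 0 then [:: ta; ta] else [:: NT j; NT j].
Definition rules r := mkseq rrule r.
Definition Gst r ns l : slp := (stt r ns l, rules r).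
Arguments Ub : simpl never.
Arguments Vb : simpl never.

Lemma fsymE j (c : bool) : Defs.fsym j c = nseq c (Ysym j).
Proof. by case: c; case: j. Qed.

Lemma VbS r n : Vb r.+1 n = Defs.fsym r (odd (n %/ 2 ^ r)) ++ Vb r n.
Proof.
rewrite /Vb /= subn0 (iotaDl 1 0) -map_comp; congr (_ ++ flatten _).
apply: eq_map => s /=; have -> : r - (1 + s) = r.-1 - s by lia. by [].
Qed.

Definition goodsym r (x : sym) := (0 < r /\ x = ta) \/ exists j, x = NT j /\ 0 < j < r.

Lemma Vb_mem r n x : x \in Vb r n -> goodsym r x.
Proof.
elim: r => [|r IH] //; rewrite VbS mem_cat fsymE => /orP [/nseqP [-> _]|/IH].
  rewrite /Ysym; case: r {IH} => [|r]; [by left | right; exists r.+1; split => //; lia].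
case=> [[H ->]|[j [-> H]]]; [left | right; exists j]; split => //; lia.
Qed.

Lemma goodsym_Y r x : goodsym r x -> x != Ysym r.
Proof.
case=> [[H ->]|[j [-> H]]]; rewrite /Ysym; case: r H => //= r H.
by apply/eqP => -[]; lia.
Qed.

Lemma size_Vb r n : size (Vb r n) <= r.
Proof.
elim: r => [|r IH] //; rewrite VbS size_cat fsymE size_nseq.
by case: (odd _) => /=; lia.
Qed.

Lemma tb_Y r : tb != Ysym r.
Proof. by rewrite /Ysym; case: r. Qed.

Lemma stt_mem r ns l x : x \in stt r ns l ->
  x = tb \/ x = Ysym r \/ goodsym r x.
Proof.
have HU : forall n, x \in Ub r n -> x = tb \/ x = Ysym r \/ goodsym r x.
  move=> n; rewrite mem_cat => /orP [/nseqP [-> _]|/Vb_mem]; tauto.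
rewrite /stt mem_cat => /orP [H|H]; last exact: HU _ H.
elim: ns H => [|n ns IH] //; rewrite [flatten _]/= -catA !mem_cat => /orP [H|/orP [H|H]];
  [by apply: (HU n); rewrite mem_cat | | exact: IH H].
by move: H; rewrite mem_seq1 => /eqP ->; left.
Qed.

Lemma count_stt_Y r ns l :
  count_mem (Ysym r) (stt r ns l) = sumn [seq n %/ 2 ^ r | n <- ns] + l %/ 2 ^ r.
Proof.
have HU : forall n, count_mem (Ysym r) (Ub r n) = n %/ 2 ^ r.
  move=> n; rewrite count_cat count_nseq /= eqxx mul1n.
  rewrite (eq_in_count (a2 := pred0)) ?count_pred0 ?addn0 //.
  by move=> x /Vb_mem /goodsym_Y /= /negbTE; rewrite eq_sym.
rewrite /stt count_cat HU; congr (_ + _).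
elim: ns => [|n ns IH] //.
rewrite [flatten _]/= count_cat count_cat HU IH /=; case: eqP => [E|_]; first by move: (tb_Y r); rewrite E eqxx.
by rewrite /= !addn0.
Qed.

Lemma count_stt_nY r ns l :
  count (predC1 (Ysym r)) (stt r ns l) <= size ns * r.+1 + r.
Proof.
have HU : forall n, count (predC1 (Ysym r)) (Ub r n) <= r.
  move=> n; rewrite count_cat (eq_in_count (a1 := predC1 _) (a2 := pred0) (s := nseq _ _)).
    by rewrite count_pred0 add0n; apply: leq_trans (count_size _ _) (size_Vb r n).
  by move=> x /nseqP [-> _] /=; rewrite eqxx.
rewrite /stt count_cat; apply: leq_add; last exact: HU.
elim: ns => [|n ns IH] //; rewrite [flatten _]/= count_cat count_cat mulSn.
have H1 := HU n; have H2 : count (predC1 (Ysym r)) [:: tb] <= 1 by apply: count_size.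
apply: leq_trans (leq_add (leq_add H1 H2) IH) _; rewrite addn1; exact: leqnn.
Qed.

Lemma rules_mem r x : x \in flatten (rules r) -> goodsym r x.
Proof.
move=> /flatten_mapP [j]; rewrite mem_iota add0n => /andP [_ Hj].
rewrite /rrule; case: eqP => [E|Hj0]; rewrite !inE => /orP [] /eqP ->.
- by left; split => //; lia.
- by left; split => //; lia.
- right; exists j; split => //; lia.
- right; exists j; split => //; lia.
Qed.

Lemma size_rules r : size (flatten (rules r)) = r.*2.
Proof.
rewrite /rules /mkseq size_flatten /shape -map_comp.
rewrite (eq_map (g := fun _ => 2)); last by move=> j; rewrite /= /rrule; case: (j == 0).
have -> : forall s : seq nat, sumn [seq 2 | _ <- s] = (size s).*2.
  by elim => //= ? s ->; rewrite doubleS.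
by rewrite size_iota.
Qed.

Section Step.
Variable r : nat.
Local Notation Y := (Ysym r).
Local Notation X := (NT r.+1).
Local Notation R := (repl [:: Y; Y] X).

Lemma YS : Ysym r.+1 = X. Proof. by []. Qed.

Lemma R_Ub n w : (forall c w', w = c :: w' -> c != Y) -> R (Ub r n ++ w) = Ub r.+1 n ++ R w.
Proof.
move=> Hw; rewrite /Ub -catA R_nseq; last first.
  case E : (Vb r n) => [|c v] c' w' /=; first exact: Hw.
  by case=> <- _; apply: goodsym_Y; apply: (@Vb_mem r n); rewrite E mem_head.
rewrite R_notin; last by apply/negP => /Vb_mem /goodsym_Y; rewrite eqxx.
by rewrite VbS fsymE YS -divn2 -divnMA -expnSr !catA.
Qed.

Lemma R_stt ns l : R (stt r ns l) = stt r.+1 ns l.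
Proof.
rewrite /stt; elim: ns => [|n ns IH] /=.
  by have := @R_Ub l [::]; rewrite !cats0 => ->.
rewrite -(catA (Ub r n ++ [:: tb])) -(catA (Ub r n)) R_Ub; last first.
  by move=> c w' [<- _]; exact: tb_Y.
rewrite [[:: tb] ++ _]/= Rne ?tb_Y // IH.
by rewrite -(catA (Ub r.+1 n ++ [:: tb])) -(catA (Ub r.+1 n)).
Qed.

Lemma R_rules : [seq R x | x <- rules r] = rules r.
Proof.
rewrite -[RHS]map_id; apply/eq_in_map => x Hx /=.
rewrite -[x]cats0 R_notin ?cats0 //; apply/negP => HY.
have : Y \in flatten (rules r) by apply/flattenP; exists x.
by move/rules_mem/goodsym_Y; rewrite eqxx.
Qed.

Lemma rules_rcons : rcons (rules r) [:: Y; Y] = rules r.+1.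
Proof. by rewrite /rules mkseqS /rrule /Ysym; case: r. Qed.

Lemma occ_ge G g C ps : occ_count G g C -> nonoverlap_occs g G.1 ps -> size ps <= C.
Proof.
case=> ns [Hsz [Hm <-]] Hps.
have H0 : 0 < size ns by rewrite Hsz.
have [_ Hb] := Hm 0 H0.
apply: leq_trans (Hb ps Hps) _.
by case: ns {Hsz Hm H0 Hb} => //= m ns; rewrite leq_addr.
Qed.

Lemma X_notin_stt ns l : count_mem X (stt r ns l) = 0.
Proof.
apply/count_memPn/negP => /stt_mem [//|[|]].
  by rewrite /Ysym; case: r => //= r' [] /eqP; rewrite -[_ == _]/(r'.+2 == r'.+1); lia.
by case=> [[_ //]|[j [[E] H]]]; lia.
Qed.

Lemma step ns l :
  (forall n, n \in ns -> 4 <= n %/ 2 ^ r) -> 4 <= l %/ 2 ^ r ->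
  size ns * r.+1 + 3 * r < sumn [seq n %/ 2 ^ r.+1 | n <- ns] + l %/ 2 ^ r.+1 ->
  (exists G1, repair_step (Gst r ns l) G1) /\
  (forall G1, repair_step (Gst r ns l) G1 -> G1 = Gst r.+1 ns l).
Proof.
move=> Hns Hl HL.
set W := sumn [seq n %/ 2 ^ r.+1 | n <- ns] + l %/ 2 ^ r.+1 in HL *.
set G := Gst r ns l.
have half n : n %/ 2 ^ r.+1 = (n %/ 2 ^ r)./2 by rewrite -divn2 -divnMA -expnSr.
have HW2 : 2 <= W.
  rewrite /W half; apply: leq_trans (leq_addl _ _); move: Hl; lia.
have HF : flatten (rhss G) = stt r ns l ++ flatten (rules r) by [].
have HQ : count_mem Y (flatten (rhss G)) < 3 * W.
  rewrite HF count_cat count_stt_Y.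
  have -> : count_mem Y (flatten (rules r)) = 0.
    by apply/count_memPn/negP => /rules_mem/goodsym_Y; rewrite eqxx.
  rewrite addn0 /W half mulnDr.
  have Hs : sumn [seq n %/ 2 ^ r | n <- ns] <= 3 * sumn [seq n %/ 2 ^ r.+1 | n <- ns].
    clear -Hns half; elim: ns Hns => [|n ns IH] Hns //=.
    have := Hns n (mem_head _ _); rewrite mulnDr half.
    have := IH (fun m Hm => Hns m (introT orP (or_intror Hm))); lia.
  move: Hl Hs; lia.
have HLc : count (predC1 Y) (flatten (rhss G)) < W.
  rewrite HF count_cat; have H1 := count_stt_nY r ns l.
  have H2 := count_size (predC1 Y) (flatten (rules r)); rewrite size_rules -muln2 in H2.
  apply: leq_ltn_trans (leq_add H1 H2) _; rewrite -addnA; apply: leq_ltn_trans _ HL.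
  rewrite leq_add2l; lia.
have gp : 0 < size [:: Y; Y] by [].
have [C HC] := occ_exists G gp.
have WC : W <= C.
  have XY : X \notin [:: Y; Y].
    by rewrite !inE orbb; rewrite /Ysym; case: r => //= r'; apply/eqP => -[]; lia.
  have [ps [Hps Hc]] := repl_witness (size (stt r ns l)) (stt r ns l) XY gp.
  have Hc' : count_mem X (R (stt r ns l)) = size ps + count_mem X (stt r ns l) := Hc.
  move: Hc'; rewrite R_stt -YS count_stt_Y YS X_notin_stt addn0 => HW.
  rewrite /W HW; exact: occ_ge HC Hps.
have bound : forall g n, occ_count G g n -> 2 <= size g -> g != [:: Y; Y] -> n < W.
  move=> g n Hn Hs Hne.
  case: (posnP (count (predC1 Y) g)) => [H0|Hpos].
    have E : count (predC1 Y) g = count (predC (pred1 Y)) g by apply: eq_count.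
    have Hc := count_predC (pred1 Y) g.
    have Hall : all (pred1 Y) g by rewrite all_count; apply/eqP; lia.
    move/all_pred1P: Hall => Eg.
    have H3 : 3 <= size g.
      case: (ltngtP (size g) 2) => // [|Hs2]; first lia.
      by move: Hne; rewrite Eg Hs2 eqxx.
    have Hcg : count (pred1 Y) g = size g by rewrite -Hc -E H0 addn0.
    have := occ_bound (pred1 Y) Hn; rewrite Hcg => H4.
    have H5 := leq_ltn_trans H4 HQ.
    have H6 : 3 * n <= size g * n by rewrite leq_mul2r H3 orbT.
    move: (leq_ltn_trans H6 H5); rewrite ltn_mul2l /=; done.
  have H := occ_bound (predC1 Y) Hn; apply: leq_ltn_trans (leq_ltn_trans H HLc); exact: leq_pmull.
have HM : maximal_string G [:: Y; Y] C.
  split => //; split => //; split; first lia.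
  move=> g' n' Hs Hn'; have := bound g' n' Hn'.
  have Hne : g' != [:: Y; Y] by apply/eqP => E; move: Hs; rewrite E ltnn.
  move: Hs => /= Hs; move/(_ (ltnW Hs) Hne); lia.
split.
  exists (repl [:: Y; Y] (NT (size G.2).+1) G.1,
          rcons [seq repl [:: Y; Y] (NT (size G.2).+1) x | x <- G.2] [:: Y; Y]).
  exists [:: Y; Y], C; split => //; split => // g' n' Hm.
  case: (eqVneq g' [:: Y; Y]) => [E|Hne].
    by move: Hm; rewrite E => -[_ [Hm _]]; rewrite (occ_unique Hm HC).
  have := bound g' n' Hm.2.1 Hm.1 Hne; lia.
move=> G1 [g [n [Hm [Hge ->]]]].
have := Hge _ _ HM => Cn.
case: (eqVneq g [:: Y; Y]) => [->|Hne].
  by rewrite /G /Gst /= size_mkseq R_stt R_rules rules_rcons.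
have := bound g n Hm.2.1 Hm.1 Hne; lia.
Qed.
End Step.

Lemma run_lemma K ns l :
  (forall r, r < K -> (exists G1, repair_step (Gst r ns l) G1) /\
        (forall G1, repair_step (Gst r ns l) G1 -> G1 = Gst r.+1 ns l)) ->
  forall m r, r + m <= K ->
  (exists G', repair_run m (Gst r ns l) G') /\
  (forall G', repair_run m (Gst r ns l) G' -> G' = Gst (r + m) ns l).
Proof.
move=> Hs; elim=> [|m IH] r Hr.
  by split; [exists (Gst r ns l) | move=> G' /= ->; rewrite addn0].
have [[G1 HG1] HU] := Hs r ltac:(lia).
have [[G' HG'] HU'] := IH r.+1 ltac:(lia).
split.
  by exists G'; exists (Gst r.+1 ns l); split => //; rewrite -(HU _ HG1).
move=> G'' [G2 [H2 H3]]; rewrite (HU _ H2) in H3.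
by rewrite (HU' _ H3) addSnnS.
Qed.

Lemma foldl_ge s acc :
  acc * 2 ^ size s <= foldl (fun acc (c : bool) => acc.*2 + nat_of_bool c) acc s.
Proof.
elim: s acc => [|c s IH] acc /=; first by rewrite muln1.
apply: leq_trans (IH _); rewrite expnS mulnA leq_mul2r; apply/orP; right; lia.
Qed.

Lemma binval_ge s : 2 ^ size s <= binval (true :: s).
Proof. by have := foldl_ge s 1; rewrite mul1n. Qed.

Lemma binval_rcons s c : binval (rcons s c) = (binval s).*2 + c.
Proof. by rewrite /binval foldl_rcons. Qed.

Lemma binval_bit s j : j < size s ->
  odd (binval s %/ 2 ^ j) = nth false s (size s - j.+1).
Proof.
elim/last_ind: s j => [|s c IH] j //; rewrite size_rcons binval_rcons => Hj.
case: j Hj => [|j] Hj.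
  rewrite expn0 divn1 oddD odd_double /= subn1 /= nth_rcons ltnn eqxx.
  by case: c.
have Hh : ((binval s).*2 + c) %/ 2 = binval s.
  by rewrite -muln2 divnMDl // divn_small ?addn0 //; case: c.
rewrite expnSr mulnC divnMA Hh.
rewrite IH; last lia.
rewrite nth_rcons; have -> : size s - j.+1 < size s by lia.
congr nth; lia.
Qed.

Lemma size_flat_h s : size (flatten (map hmorph s)) = (size s).*2.
Proof. by elim: s => //= c s IH; rewrite size_cat IH; case: c. Qed.

Lemma kk_lemma k : k * k < 2 ^ k + k + 3.
Proof.
have H2 : forall k, 0 < k -> k.*2 <= 2 ^ k.
  case=> // j _; have := ltn_expl j (isT : 1 < 2); rewrite expnS; lia.
elim: k => [|k IH] //.
case: k IH => [|k] IH //.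
have := H2 k.+1 isT; rewrite -muln2; move: IH; rewrite !expnS; nia.
Qed.

Section Main.
Variables (k : nat) (B : seq bool).
Hypothesis k2 : 2 <= k.
Hypothesis szB : k <= size B.
Hypothesis hB : head false B = true.

Lemma size_wk : size (wk k B) = k.*2.
Proof. by rewrite /wk size_flat_h size_takel. Qed.

Lemma Nk_ge i : 1 <= i <= k -> 2 ^ (k + i - 1) <= Nk k B i.
Proof.
move=> /andP [i1 ik].
case: B szB hB => [|b B'] //= szB' hb; subst b.
move: ik; case: k k2 szB' => [|k'] //= _ szB' ik.
rewrite /Nk /wk /= addSn /=.
set rest := flatten _.
have Hr : size rest = (size (take k' B')).*2 by rewrite /rest size_flat_h.
rewrite size_takel -?muln2 in Hr; last lia.
apply: leq_trans (binval_ge _); rewrite size_takel /=; last lia.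
by rewrite subn1.
Qed.

Lemma div_ge4 n r : 2 ^ (r + 2) <= n -> 4 <= n %/ 2 ^ r.
Proof. by move=> H; rewrite leq_divRL ?expn_gt0 // (_ : 4 * 2 ^ r = 2 ^ (r + 2)) // expnD mulnC. Qed.

Lemma sum_ge (s : seq nat) (f : nat -> nat) c : (forall n, n \in s -> c <= f n) ->
  c * size s <= sumn [seq f n | n <- s].
Proof.
elim: s => [|n s IH] H /=; first by rewrite muln0.
rewrite mulnS; apply: leq_add; first exact: H (mem_head _ _).
by apply: IH => m Hm; apply: H; rewrite in_cons Hm orbT.
Qed.

Definition nsk := [seq Nk k B i | i <- iota 1 (k - 1)].
Definition lk := Nk k B k.

Lemma step_ok r : r < k - 1 ->
  (exists G1, repair_step (Gst r nsk lk) G1) /\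
  (forall G1, repair_step (Gst r nsk lk) G1 -> G1 = Gst r.+1 nsk lk).
Proof.
move=> Hr.
have Hge : forall n, n \in nsk -> 2 ^ k <= n.
  move=> n /mapP [i]; rewrite mem_iota => /andP [H1 H2] ->.
  apply: leq_trans (Nk_ge _) ; last lia.
  apply: leq_pexp2l => //; lia.
have Hl : 2 ^ (k + k - 1) <= lk by apply: Nk_ge; lia.
have Pk : 2 ^ (r + 2) <= 2 ^ k by apply: leq_pexp2l => //; lia.
apply: step.
- move=> n Hn; apply: div_ge4; exact: leq_trans Pk (Hge n Hn).
- apply: div_ge4; apply: leq_trans Pk (leq_trans _ Hl); apply: leq_pexp2l => //; lia.
have H1 : 2 * size nsk <= sumn [seq n %/ 2 ^ r.+1 | n <- nsk].
  apply: sum_ge => n Hn; rewrite leq_divRL ?expn_gt0 // -expnS.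
  apply: leq_trans (Hge n Hn); apply: leq_pexp2l => //; lia.
have H2 : 2 ^ k <= lk %/ 2 ^ r.+1.
  rewrite leq_divRL ?expn_gt0 // -expnD; apply: leq_trans Hl.
  apply: leq_pexp2l => //; lia.
have Hsz : size nsk = k - 1 by rewrite size_map size_iota.
have := kk_lemma k; rewrite Hsz in H1 *.
move: H1 H2; set t := 2 ^ k; set S := sumn _; nia.
Qed.

Lemma init_ok : repair_init (sk k B) = Gst 0 nsk lk.
Proof.
rewrite /repair_init /Gst /stt /sk /nsk /lk; congr (_, _).
have HU : forall n, Ub 0 n = nseq n ta by move=> n; rewrite /Ub /Vb expn0 divn1 cats0.
by rewrite HU -map_comp; congr (flatten _ ++ _); apply: eq_map => i /=; rewrite HU.
Qed.

Lemma uk_ok i : 1 <= i <= k -> Ub (k - 1) (Nk k B i) = uk k B i.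
Proof.
move=> /andP [i1 ik].
rewrite /Ub /uk /qk /Ysym; have -> : (k - 1 == 0) = false by apply/eqP; lia.
congr (_ ++ _).
rewrite /vk; have -> : iota (i + 2) (k - 1) = [seq i + 2 + s | s <- iota 0 (k - 1)] by rewrite -iotaDl addn0.
rewrite /Vb -map_comp; congr flatten.
apply/eq_in_map => s; rewrite mem_iota add0n => /andP [_ Hs] /=.
have -> : k + i - (i + 2 + s) = (k - 1).-1 - s by lia.
congr Defs.fsym.
have Hsz : size (take (k + i) (wk k B)) = k + i by rewrite size_takel // size_wk; lia.
rewrite /Nk binval_bit Hsz; last lia.
rewrite nth_take; last lia.
congr nth; lia.
Qed.

Lemma start_ok : stt (k - 1) nsk lk = expected_start k B.
Proof.
rewrite /stt /expected_start /nsk /lk uk_ok; last lia.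
rewrite -map_comp; congr (flatten _ ++ _); apply/eq_in_map => i.
by rewrite mem_iota => /andP [H1 H2] /=; rewrite uk_ok //; lia.
Qed.

End Main.

Theorem mainTheorem4 (k : nat) (B : seq bool) :
  2 <= k ->
  is_deBruijn (up_log 2 k) B ->
  head false B = true ->
  (exists G, repair_run (k - 1) (repair_init (sk k B)) G) /\
  (forall G, repair_run (k - 1) (repair_init (sk k B)) G ->
     G.2 = expected_rules k /\
     G.1 = expected_start k B /\
     (forall i, 1 <= i <= k -> 2 <= qk k B i)).
Proof.
move=> k2 [HszB _] hB.
have szB : k <= size B by rewrite HszB; apply: up_logP.
have [Hex Hall] := run_lemma (@step_ok k B k2 szB hB) (m := k - 1) (r := 0) (leqnn _).
rewrite (init_ok k B); split => // G HG.
rewrite (Hall G HG) /=; split => //; split; first exact: start_ok.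
move=> i Hi; rewrite /qk leq_divRL ?expn_gt0 //.
apply: leq_trans (Nk_ge k2 szB hB Hi); rewrite mulnC -expnSr; apply: leq_pexp2l => //; lia.
Qed.
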